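(* Fix an integer $d>2$. Suppose $\Gamma$ is a star whose central vertex is $\alpha_0$ and whose other vertices $\alpha_1,\dots,\alpha_n$ are listed according to the cyclic ordering of the corresponding edges at $\alpha_0$; set $\alpha_{n+1}=\alpha_1$. Then the Brauer graph algebra associated to $(\Gamma,\mathfrak o,\mathfrak m,\mathfrak q)$ (any $\mathfrak q$) is $2$-$d$-homogeneous if and only if $n$ divides $d$, $\mathfrak m(\alpha_0)=\frac dn$, and for every $1\le i\le n$ we have $\mathfrak m(\alpha_i)\in\{1,d\}$ and $\mathfrak m(\alpha_i)\mathfrak m(\alpha_{i+1})\in\{d,d^2\}$.
   Context: Let $K$ be a field. A Brauer graph $(\Gamma,\mathfrak o,\mathfrak m)$ consists of a finite connected graph $\Gamma$ with at least one edge (loops and multiple edges allowed), a multiplicity function $\mathfrak m:\Gamma_0\to\mathbb Z_{>0}$ on the vertex set $\Gamma_0$, and, for each vertex $\alpha$, a cyclic ordering $\mathfrak o$ of the edges incident with $\alpha$ (a loop at $\alpha$ occurs twice in this cyclic ordering, the two occurrences being treated as distinct). The valency $\mathrm{val}(\alpha)$ is the number of edges incident with $\alpha$, loops counted twice. An edge $t$ is the successor of $s$ at $\alpha$ if $t$ directly follows $s$ in the cyclic ordering at $\alpha$ (if $\mathrm{val}(\alpha)=1$ the unique edge is its own successor). An edge $s$ is truncated at $\alpha$ if $\mathrm{val}(\alpha)=1$, $\mathfrak m(\alpha)=1$ and $s$ is the edge at $\alpha$; $s$ is a truncated edge if it is truncated at one of its endpoints. The successor sequence of $s$ at $\alpha$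 is $s=s_0,s_1,\dots,s_{\mathrm{val}(\alpha)-1}$ with $s_{i+1}$ the successor of $s_i$ at $\alpha$. A quantizing function $\mathfrak q$ assigns $\mathfrak q_{s,\alpha}\in K\setminus\{0\}$ to each pair $(s,\alpha)$ with $s$ incident with $\alpha$ and $s$ not truncated at either endpoint; $(\Gamma,\mathfrak o,\mathfrak m,\mathfrak q)$ is a quantized Brauer graph. The Brauer graph algebra $A_\Gamma=KQ_\Gamma/I_\Gamma$ (paths written left to right) is: if $\Gamma=\mathbb A_2$ with both multiplicities $1$, $A_\Gamma=K[x]/(x^2)$. Otherwise $Q_\Gamma$ has a vertex $v_s$ for each edge $s$, and for each vertex $\alpha$ and each occurrence of $t$ as the successor of $s$ at $\alpha$ with $s$ not truncated at $\alpha$, an arrow $v_s\to v_t$. For $s$ at $\alpha$ not truncated at $\alpha$, with successor sequence $s_0,\dots,s_{v-1}$, $v=\mathrm{val}(\alpha)$, $s_v=s_0$, let $C_{s,\alpha}=a_0a_1\cdots a_{v-1}$, where $a_r$ is the arrow for $s_{r+1}$ succeeding $s_r$ at $\alpha$. $I_\Gamma$ is generated by: type one: for each edge $s$ with endpoints $\alpha,\beta$ not truncated at either, $\mathfrak q_{s,\alpha}C_{s,\alpha}^{\mathfrak m(\alpha)}-\mathfrak q_{s,\beta}C_{s,\beta}^{\mathfrak m(\beta)}$; type two: for each edge $s$ truncated at $\alpha$ with other endpoint $\beta$, writing $C_{s,\beta}=b_0b_1\cdots b_{\mathrm{val}(\beta)-1}$, the path $C_{s,\beta}^{\mathfrak m(\beta)}b_0$;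 type three: each path $ab$ of length $2$ in $Q_\Gamma$ that is not a subpath of any $C_{t,\gamma}$. A star is a tree with a central vertex joined by $n\ge1$ edges to $n$ vertices of valency $1$. For distinct integers $d,d'\ge2$, $KQ/I$ is $d$-$d'$-homogeneous if $I$ has a minimal generating set consisting of length-homogeneous elements each of length $d$ or $d'$, and the algebra is neither $d$-homogeneous nor $d'$-homogeneous (i.e. not generated by elements of a single one of these lengths). *)

(* Defs.v *)
From HB Require Import structures.
From mathcomp Require Import all_boot all_order all_algebra.
Set Implicit Arguments. Unset Strict Implicit. Unset Printing Implicit Defensive.
Import GRing.Theory.
Local Open Scope ring_scope.

(* Path algebras KQ of finite quivers, elements as finitely supported  *)
(* coefficient functions on paths; paths written left to right.       *)

Record quiver := Quiver {
  qV : eqType;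
  qA : eqType;                 (* candidate arrows *)
  qsrc : qA -> qV;
  qtgt : qA -> qV;
  qarrow : qA -> bool          (* which candidates really are arrows of Q *)
}.

Definition qpath (Q : quiver) := (qV Q * seq (qA Q))%type.

Definition plen (Q : quiver) (p : qpath Q) : nat := size p.2.

Definition ptgt (Q : quiver) (p : qpath Q) : qV Q := last p.1 (map (@qtgt Q) p.2).

Fixpoint composable (Q : quiver) (v : qV Q) (s : seq (qA Q)) : bool :=
  match s with
  | [::] => true
  | a :: s' => (qsrc a == v) && qarrow a && composable (qtgt a) s'
  end.

Definition pvalid (Q : quiver) (p : qpath Q) : bool := composable p.1 p.2.

Definition kq_elem (K : fieldType) (Q : quiver) (f : qpath Q -> K) : Prop :=
  (exists supp : seq (qpath Q), forall p, f p != 0 -> p \in supp) /\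
  (forall p, f p != 0 -> pvalid p).

Definition kq_zero (K : fieldType) (Q : quiver) : qpath Q -> K := fun _ => 0.
Definition kq_add (K : fieldType) (Q : quiver) (f g : qpath Q -> K) : qpath Q -> K :=
  fun p => f p + g p.
Definition kq_scale (K : fieldType) (Q : quiver) (c : K) (f : qpath Q -> K) : qpath Q -> K :=
  fun p => c * f p.
Definition kq_mul (K : fieldType) (Q : quiver) (f g : qpath Q -> K) : qpath Q -> K :=
  fun p => if pvalid p then
             \sum_(k < (size p.2).+1)
               f (p.1, take k p.2) * g (ptgt (p.1, take k p.2), drop k p.2)
           else 0.

Definition kq_path (K : fieldType) (Q : quiver) (p : qpath Q) : qpath Q -> K :=
  fun p' => if p' == p then 1 else 0.
Arguments kq_path {K Q} p _.

Inductive in_ideal (K : fieldType) (Q : quiver) (S : (qpath Q -> K) -> Prop)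
  : (qpath Q -> K) -> Prop :=
| ideal_gen x : S x -> in_ideal S x
| ideal_zero : in_ideal S (@kq_zero K Q)
| ideal_add x y : in_ideal S x -> in_ideal S y -> in_ideal S (kq_add x y)
| ideal_scale c x : in_ideal S x -> in_ideal S (kq_scale c x)
| ideal_lmul a x : kq_elem a -> in_ideal S x -> in_ideal S (kq_mul a x)
| ideal_rmul x b : kq_elem b -> in_ideal S x -> in_ideal S (kq_mul x b).

Definition generates (K : fieldType) (Q : quiver) (S I : (qpath Q -> K) -> Prop) : Prop :=
  (forall x, S x -> kq_elem x) /\ (forall x, in_ideal S x <-> I x).

Definition minimal_generating (K : fieldType) (Q : quiver) (S I : (qpath Q -> K) -> Prop) : Prop :=
  generates S I /\
  forall S' : (qpath Q -> K) -> Prop,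
    (forall x, S' x -> S x) -> generates S' I -> forall x, S x -> S' x.

Definition len_homogeneous (K : fieldType) (Q : quiver) (l : nat) (x : qpath Q -> K) : Prop :=
  forall p, x p != 0 -> plen p = l.

(* KQ/I is d-homogeneous: I generated by length-homogeneous elements of length d *)
Definition homogeneous_alg (K : fieldType) (Q : quiver) (I : (qpath Q -> K) -> Prop) (d : nat) : Prop :=
  exists S, generates S I /\ forall x, S x -> len_homogeneous d x.

Definition homogeneous2_alg (K : fieldType) (Q : quiver) (I : (qpath Q -> K) -> Prop)
    (d d' : nat) : Prop :=
  (exists S, minimal_generating S I /\
     forall x, S x -> len_homogeneous d x \/ len_homogeneous d' x) /\
  ~ homogeneous_alg I d /\ ~ homogeneous_alg I d'.

(* Brauer graphs, encoded by half-edges (occurrences of an edge at an  *)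
(* endpoint): hopp = other occurrence of the same edge, hsucc = the    *)
(* occurrence following it in the cyclic ordering at its vertex.       *)

Record bgraph := BGraph {
  bV : finType;
  bE : finType;
  bH : finType;
  hvert : bH -> bV;
  hedge : bH -> bE;
  hopp : bH -> bH;
  hsucc : bH -> bH
}.

Section BrauerGraphAlgebra.
Variables (K : fieldType) (G : bgraph) (m : bV G -> nat) (q : bE G -> bV G -> K).

Definition valency (a : bV G) : nat := #|[pred h | hvert h == a]|.

Definition htrunc (h : bH G) : bool := (valency (hvert h) == 1%N) && (m (hvert h) == 1%N).

(* quiver Q_Gamma: vertex v_s per edge s; arrow per non-truncated occurrence *)
Definition bg_quiver : quiver :=
  @Quiver (bE G) (bH G) (@hedge G) (fun h => hedge (hsucc h)) (fun h => ~~ htrunc h).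

(* C_{s,alpha}: the successor sequence of arrows starting at occurrence h *)
Definition cyc_word (h : bH G) : seq (bH G) :=
  [seq iter r (@hsucc G) h | r <- iota 0 (valency (hvert h))].

Definition cyc_pow (h : bH G) (k : nat) : qpath bg_quiver :=
  (hedge h, flatten (nseq k (cyc_word h))).

Definition qcoef (h : bH G) : K := q (hedge h) (hvert h).

Definition bg_relations : (qpath bg_quiver -> K) -> Prop := fun x =>
  (exists h, ~~ htrunc h /\ ~~ htrunc (hopp h) /\
     x = kq_add (kq_scale (qcoef h) (kq_path (cyc_pow h (m (hvert h)))))
                (kq_scale (- qcoef (hopp h))
                          (kq_path (cyc_pow (hopp h) (m (hvert (hopp h))))))) \/
  (exists h, htrunc h /\
     x = kq_path ((hedge (hopp h),
                  (cyc_pow (hopp h) (m (hvert (hopp h)))).2 ++ [:: hopp h]) : qpath bg_quiver)) \/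
  (* type three: paths ab of length 2 not a subpath of any C_{t,gamma} *)
  (exists h h', ~~ htrunc h /\ ~~ htrunc h' /\ hedge (hsucc h) = hedge h' /\
     h' <> hsucc h /\ x = kq_path ((hedge h, [:: h; h']) : qpath bg_quiver)).

Definition bg_ideal : (qpath bg_quiver -> K) -> Prop := in_ideal bg_relations.

(* Gamma = A_2 with both multiplicities 1 *)
Definition bg_special : bool :=
  (#|bE G| == 1%N) && (#|bV G| == 2%N) && [forall a, m a == 1%N].

End BrauerGraphAlgebra.
Arguments bg_relations {K G} m q _.
Arguments bg_ideal {K G} m q _.
Arguments bg_quiver {G} m.

(* K[x]/(x^2) as a quiver algebra: one vertex, one loop *)
Definition loop_quiver : quiver := @Quiver unit unit (fun _ => tt) (fun _ => tt) (fun _ => true).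

Definition loop_ideal (K : fieldType) : (qpath loop_quiver -> K) -> Prop :=
  in_ideal (fun x => x = kq_path ((tt, [:: tt; tt]) : qpath loop_quiver)).

Definition bga_homogeneous2 (K : fieldType) (G : bgraph) (m : bV G -> nat)
    (q : bE G -> bV G -> K) (d d' : nat) : Prop :=
  if bg_special m then homogeneous2_alg (@loop_ideal K) d d'
  else homogeneous2_alg (bg_ideal m q) d d'.

Definition quantizing (K : fieldType) (G : bgraph) (m : bV G -> nat)
    (q : bE G -> bV G -> K) : Prop :=
  forall h : bH G, ~~ htrunc m h -> ~~ htrunc m (hopp h) -> q (hedge h) (hvert h) != 0.

(* The star with n edges: vertex 0 = alpha_0 (centre), vertex i+1 =    *)
(* alpha_(i+1) (leaf), edge i joins alpha_0 and alpha_(i+1); the cyclic *)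
(* ordering at alpha_0 is edge 0, edge 1, ..., edge n-1.                *)
(* Half-edges: inl i = edge i at alpha_0, inr i = edge i at its leaf.   *)

Definition star_vert (n : nat) (h : 'I_n + 'I_n) : 'I_n.+1 :=
  match h with inl _ => ord0 | inr i => lift ord0 i end.
Definition star_edge (n : nat) (h : 'I_n + 'I_n) : 'I_n :=
  match h with inl i => i | inr i => i end.
Definition star_opp (n : nat) (h : 'I_n + 'I_n) : 'I_n + 'I_n :=
  match h with inl i => inr i | inr i => inl i end.
Definition star_succ (n : nat) (h : 'I_n + 'I_n) : 'I_n + 'I_n :=
  match h with inl i => inl (ordS i) | inr i => inr i end.

Definition star (n : nat) : bgraph :=
  @BGraph 'I_n.+1 'I_n ('I_n + 'I_n)%type
    (@star_vert n) (@star_edge n) (@star_opp n) (@star_succ n).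

Definition leaf (n : nat) (i : 'I_n) : 'I_n.+1 := lift ord0 i.

(* Main.v *)
Require Import Defs.
From HB Require Import structures.
From mathcomp Require Import all_boot all_order all_algebra.
From Stdlib Require Import FunctionalExtensionality.
From mathcomp Require Import zify ring.
From Stdlib Require Import Classical.
Import GRing.Theory.
Set Implicit Arguments. Unset Strict Implicit. Unset Printing Implicit Defensive.

Definition fact (T : Type) (w s : seq T) := exists u v, s = u ++ w ++ v.
Definition pfact (T : Type) (w s : seq T) := fact w s /\ (size w < size s)%N.

Lemma fact_refl (T : Type) (s : seq T) : fact s s.
Proof. by exists [::], [::]; rewrite cats0. Qed.

Lemma fact_trans (T : Type) (a b c : seq T) : fact a b -> fact b c -> fact a c.
Proof.
move=> [u [v ->]] [u' [v' ->]]; exists (u' ++ u), (v ++ v').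
by rewrite -!catA.
Qed.

Lemma fact_size (T : Type) (w s : seq T) : fact w s -> (size w <= size s)%N.
Proof. by move=> [u [v ->]]; rewrite !size_cat addnCA leq_addr. Qed.

Lemma fact_take (T : Type) k (s : seq T) : fact (take k s) s.
Proof. by exists [::], (drop k s); rewrite cat_take_drop. Qed.

Lemma fact_drop (T : Type) k (s : seq T) : fact (drop k s) s.
Proof. by exists (take k s), [::]; rewrite cats0 cat_take_drop. Qed.

Lemma fact_ext (T : Type) (u w v : seq T) : fact w (u ++ w ++ v).
Proof. by exists u, v. Qed.

Lemma pfact_sub (T : Type) (a b s : seq T) : fact a b -> pfact b s -> pfact a s.
Proof.
move=> Hab [Hbs Hsz]; split; first exact: fact_trans Hab Hbs.
exact: leq_ltn_trans (fact_size Hab) Hsz.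
Qed.

Section Gen.
Variables (K : fieldType) (Q : quiver).
Local Open Scope ring_scope.
Implicit Types (x y a b r : qpath Q -> K) (p u : qpath Q).

Lemma sum_neq0 k (F : 'I_k -> K) : \sum_i F i != 0 -> exists i, F i != 0.
Proof.
move=> H; case: (pickP (fun i => F i != 0)) => [i Hi|H0]; first by exists i.
move: H; rewrite big1 ?eqxx // => i _.
by move: (H0 i) => /= /negbFE/eqP.
Qed.

Lemma mul_supp a x p : kq_mul a x p != 0 -> pvalid p /\
  exists k, (k <= size p.2)%N /\ a (p.1, take k p.2) != 0 /\
            x (ptgt (p.1, take k p.2), drop k p.2) != 0.
Proof.
rewrite /kq_mul; case: ifP => Hv; last by rewrite eqxx.
move=> /sum_neq0 [k]; rewrite mulf_eq0 negb_or => /andP[Ha Hx]; split=> //.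
by exists k; split=> //; rewrite -ltnS.
Qed.

Lemma ideal_supp (R : (qpath Q -> K) -> Prop) (Pw : seq (qA Q) -> Prop) :
  (forall (l s t : seq (qA Q)), Pw s -> Pw (l ++ s ++ t)) ->
  (forall r p, R r -> r p != 0 -> Pw p.2) ->
  forall x, in_ideal R x -> forall p, x p != 0 -> Pw p.2.
Proof.
move=> Hext Hgen x; elim => {x}.
- by move=> x Rx p; apply: Hgen.
- by move=> p; rewrite /kq_zero eqxx.
- move=> x y _ IHx _ IHy p; rewrite /kq_add.
  case: (x p =P 0) => [E|/eqP E]; [rewrite E add0r; apply: IHy | by move=> _; apply: IHx].
- by move=> c x _ IH p; rewrite /kq_scale mulf_eq0 negb_or => /andP[_]; apply: IH.
- move=> a x _ _ IH p /mul_supp [_ [k [_ [_ Hx]]]].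
  have := IH _ Hx => /= /(Hext (take k p.2) _ [::]).
  by rewrite cats0 cat_take_drop.
- move=> x b _ _ IH p /mul_supp [_ [k [_ [Hx _]]]].
  have := IH _ Hx => /= /(Hext [::] _ (drop k p.2)).
  by rewrite /= cat_take_drop.
Qed.

Lemma ideal_valid (R : (qpath Q -> K) -> Prop) :
  (forall r p, R r -> r p != 0 -> pvalid p) ->
  forall x, in_ideal R x -> forall p, x p != 0 -> pvalid p.
Proof.
move=> Hgen x; elim => {x}.
- by move=> x Rx p; apply: Hgen.
- by move=> p; rewrite /kq_zero eqxx.
- move=> x y _ IHx _ IHy p; rewrite /kq_add.
  case: (x p =P 0) => [E|/eqP E]; [rewrite E add0r; apply: IHy | by move=> _; apply: IHx].
- by move=> c x _ IH p; rewrite /kq_scale mulf_eq0 negb_or => /andP[_]; apply: IH.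
- by move=> a x _ _ IH p /mul_supp [].
- by move=> x b _ _ IH p /mul_supp [].
Qed.

Lemma ideal_mono (S R : (qpath Q -> K) -> Prop) :
  (forall x, S x -> in_ideal R x) -> forall y, in_ideal S y -> in_ideal R y.
Proof.
move=> H y; elim => {y}.
- by move=> x Sx; apply: H.
- exact: ideal_zero.
- by move=> x y _ H1 _ H2; apply: ideal_add.
- by move=> c x _ H1; apply: ideal_scale.
- by move=> a x Ha _ H1; apply: ideal_lmul.
- by move=> x b Hb _ H1; apply: ideal_rmul.
Qed.

Lemma ideal_LI (R : (qpath Q -> K) -> Prop) (pC pB : qpath Q) (c1 c2 : K) :
  pC.1 = pB.1 -> ptgt pC = ptgt pB -> pvalid pC -> pvalid pB ->
  (forall r v w, R r -> pfact w pC.2 \/ pfact w pB.2 -> r (v, w) = 0) ->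
  (forall r, R r -> c1 * r pC + c2 * r pB = 0) ->
  forall x, in_ideal R x ->
    (forall v w, pfact w pC.2 \/ pfact w pB.2 -> x (v, w) = 0) /\
    c1 * x pC + c2 * x pB = 0.
Proof.
move=> E1 E2 VC VB Hg Hr x; elim => {x}.
- by move=> x Rx; split; [move=> v w; apply: Hg | apply: Hr].
- by split=> [v w _|]; rewrite /kq_zero ?mulr0 ?addr0.
- move=> x y _ [Hx1 Hx2] _ [Hy1 Hy2]; split.
    by move=> v w H; rewrite /kq_add Hx1 ?Hy1 ?addr0.
  by rewrite /kq_add !mulrDr addrACA Hx2 Hy2 addr0.
- move=> c x _ [H1 H2]; split.
    by move=> v w H; rewrite /kq_scale H1 ?mulr0.
  by rewrite /kq_scale mulrCA [c2 * _]mulrCA -mulrDr H2 mulr0.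
- move=> a x _ _ [H1 H2].
  have Z: forall v w, pfact w pC.2 \/ pfact w pB.2 -> kq_mul a x (v, w) = 0.
    move=> v w H; apply/eqP; apply: contraT => /mul_supp [_ [k [_ [_ Hx]]]].
    rewrite H1 ?eqxx // in Hx.
    by case: H => H; [left|right]; apply: pfact_sub H; apply: fact_drop.
  split=> //.
  have L: forall p, pvalid p -> (forall v w, pfact w p.2 -> x (v, w) = 0) ->
     kq_mul a x p = a (p.1, [::]) * x p.
    move=> [v0 s] Vp Hp; rewrite /kq_mul Vp big_ord_recl /= take0 drop0 big1 ?addr0 //.
    move=> i _; rewrite Hp ?mulr0 //; split; first exact: fact_drop.
    rewrite size_drop /=; case: i => i /= Hi.
    rewrite /bump /=; lia.
  rewrite (L pC VC (fun v w H => H1 v w (or_introl H))).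
  rewrite (L pB VB (fun v w H => H1 v w (or_intror H))).
  by rewrite E1 mulrCA [c2 * _]mulrCA -mulrDr H2 mulr0.
- move=> x b _ _ [H1 H2].
  have Z: forall v w, pfact w pC.2 \/ pfact w pB.2 -> kq_mul x b (v, w) = 0.
    move=> v w H; apply/eqP; apply: contraT => /mul_supp [_ [k [_ [Hx _]]]].
    rewrite H1 ?eqxx // in Hx.
    by case: H => H; [left|right]; apply: pfact_sub H; apply: fact_take.
  split=> //.
  have L: forall p, pvalid p -> (forall v w, pfact w p.2 -> x (v, w) = 0) ->
     kq_mul x b p = x p * b (ptgt p, [::]).
    move=> [v0 s] Vp Hp; rewrite /kq_mul Vp big_ord_recr /= take_size drop_size big1 ?add0r //.
    move=> i _; rewrite Hp ?mul0r //; split; first exact: fact_take.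
    by rewrite size_take; case: i => i /= Hi; rewrite Hi.
  rewrite (L pC VC (fun v w H => H1 v w (or_introl H))).
  rewrite (L pB VB (fun v w H => H1 v w (or_intror H))).
  by rewrite E2 !mulrA -mulrDl H2 mul0r.
Qed.


Lemma composable_cat (v : qV Q) (s1 s2 : seq (qA Q)) :
  composable v (s1 ++ s2) =
  composable v s1 && composable (last v (map (@qtgt Q) s1)) s2.
Proof.
elim: s1 v => [|c s1 IH] v //=.
by rewrite IH !andbA.
Qed.

Lemma kq_mul_path u p : pvalid u -> pvalid p -> ptgt u = p.1 ->
  kq_mul (kq_path u : qpath Q -> K) (kq_path p) = kq_path ((u.1, u.2 ++ p.2) : qpath Q).
Proof.
case: u => u1 u2; case: p => p1 p2 /= Vu Vp Et.
apply: functional_extensionality => -[r1 r2].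
rewrite /kq_mul /kq_path /=.
case Hv: (pvalid (r1, r2)); last first.
  case: eqP => // -[E1 E2]; move: Hv; rewrite /pvalid /= E1 E2 composable_cat.
  by rewrite /pvalid /ptgt /= in Vu Vp Et *; rewrite Vu Et Vp.
case: eqP => [[-> ->]|Hne].
  have Hk : (size u2 < (size (u2 ++ p2)).+1)%N by rewrite size_cat ltnS leq_addr.
  rewrite (bigD1 (Ordinal Hk)) //= take_size_cat // drop_size_cat // eqxx.
  rewrite /ptgt /= in Et; rewrite /ptgt /= Et eqxx mulr1 big1 ?addr0 //.
  move=> i /eqP Hi; case: eqP; last by rewrite mul0r.
  move=> [Ht]; exfalso; apply: Hi; apply: val_inj => /=.
  have := congr1 size Ht; rewrite size_take.
  have := ltn_ord i; rewrite ltnS leq_eqVlt => /orP[/eqP Ei|Li].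
    by rewrite Ei ltnn size_cat.
  by rewrite Li.
rewrite big1 // => i _.
case: eqP => [[E1 E2]|]; last by rewrite mul0r.
case: eqP => [[_ E3]|]; last by rewrite mulr0.
exfalso; apply: Hne; rewrite E1 -E2 -E3 /= cat_take_drop //.
Qed.

Lemma kq_mul_addr a x y : kq_mul a (kq_add x y) = kq_add (kq_mul a x) (kq_mul a y).
Proof.
apply: functional_extensionality => p; rewrite /kq_mul /kq_add.
case: ifP => _; last by rewrite addr0.
by rewrite -big_split; apply: eq_bigr => i _; rewrite mulrDr.
Qed.

Lemma kq_mul_scaler a c x : kq_mul a (kq_scale c x) = kq_scale c (kq_mul a x).
Proof.
apply: functional_extensionality => p; rewrite /kq_mul /kq_scale.
case: ifP => _; last by rewrite mulr0.
by rewrite mulr_sumr; apply: eq_bigr => i _; rewrite mulrCA.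
Qed.

Lemma kq_elem_path p : pvalid p -> kq_elem (kq_path p : qpath Q -> K).
Proof.
move=> Vp; split.
  by exists [:: p] => p'; rewrite /kq_path inE; case: (p' =P p) => // _; rewrite eqxx.
by move=> p'; rewrite /kq_path; case: (p' =P p) => [->|]; rewrite ?eqxx.
Qed.

Lemma kq_elem_add x y : kq_elem x -> kq_elem y -> kq_elem (kq_add x y).
Proof.
move=> [[s1 H1] V1] [[s2 H2] V2]; split.
  exists (s1 ++ s2) => p; rewrite /kq_add mem_cat.
  case: (x p =P 0) => [E|/eqP E]; last by rewrite H1.
  by rewrite E add0r => /H2 ->; rewrite orbT.
move=> p; rewrite /kq_add; case: (x p =P 0) => [E|/eqP E]; last by move=> _; apply: V1.
by rewrite E add0r; apply: V2.
Qed.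

Lemma kq_elem_scale c x : kq_elem x -> kq_elem (kq_scale c x).
Proof.
move=> [[s1 H1] V1]; split.
  by exists s1 => p; rewrite /kq_scale mulf_eq0 negb_or => /andP[_ /H1].
by move=> p; rewrite /kq_scale mulf_eq0 negb_or => /andP[_ /V1].
Qed.

Lemma gen_in S I x : generates S I -> S x -> I x.
Proof. by move=> [_ H] Sx; apply/H; apply: ideal_gen. Qed.

Lemma S_support S I r p : generates S I -> I r -> r p != 0 ->
  exists s v w, S s /\ s (v, w) != 0 /\ fact w p.2.
Proof.
move=> [_ HS] Ir Hr.
have := @ideal_supp S (fun t => exists s v w, S s /\ s (v, w) != 0 /\ fact w t) _ _ r _ p Hr.
apply.
- move=> l t t' [s [v [w [Ss [Hs Hf]]]]]; exists s, v, w; split=> //; split=> //.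
  by apply: fact_trans Hf (fact_ext _ _ _).
- move=> s [v w] Ss Hs; exists s, v, w; split=> //; split=> //; exact: fact_refl.
- by apply/HS.
Qed.

Lemma single_length (R : (qpath Q -> K) -> Prop) (L d : nat) S :
  (forall r, R r -> kq_elem r) -> (forall r, R r -> len_homogeneous L r) ->
  (exists r0 p0, R r0 /\ r0 p0 != 0) ->
  generates S (in_ideal R) ->
  (forall s, S s -> len_homogeneous 2 s \/ len_homogeneous d s) ->
  homogeneous_alg (in_ideal R) 2 \/ homogeneous_alg (in_ideal R) d.
Proof.
move=> Re Rh [r0 [p0 [R0 H0]]] HS Sh.
have [s [v [w [Ss [Hs Hf]]]]] := S_support HS (ideal_gen R0) H0.
have Is := gen_in HS Ss.
have Lw: (L <= size w)%N.
  have := @ideal_supp R (fun t => L <= size t)%N _ _ s Is (v, w) Hs; apply.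
    by move=> l t t' /leq_trans; apply; rewrite !size_cat addnCA leq_addr.
  by move=> r p Rr Hr; have := Rh r Rr p Hr; rewrite /plen => ->.
have Ew: size w = L.
  apply/eqP; rewrite eqn_leq Lw -(Rh r0 R0 p0 H0) /plen andbT; exact: fact_size.
have HR: homogeneous_alg (in_ideal R) L.
  by exists R; split=> //; split=> //.
by case: (Sh s Ss) => /(_ (v, w) Hs); rewrite /plen /= Ew => <-; [left|right].
Qed.

End Gen.

Section Star.
Variables (K : fieldType) (n : nat) (m : 'I_n.+1 -> nat) (q : 'I_n -> 'I_n.+1 -> K).
Local Notation G := (star n).
Local Notation Q := (@bg_quiver G m).
Local Notation HE := ('I_n + 'I_n)%type.

Lemma val_ordS (i : 'I_n) : val (ordS i) = i.+1 %% n.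
Proof. by []. Qed.

Lemma val_iter_ordS (i : 'I_n) r : val (iter r (@ordS n) i) = (i + r) %% n.
Proof.
elim: r => [|r IH] /=; first by rewrite addn0 modn_small.
by rewrite -addn1 IH modnDml addn1 addnS.
Qed.

Lemma iter_ordS_n (i : 'I_n) : iter n (@ordS n) i = i.
Proof. by apply: val_inj; rewrite val_iter_ordS modnDr modn_small. Qed.

Lemma valency_center : valency (G:=G) ord0 = n.
Proof.
rewrite /valency -sum1_card big_sumType /=.
have E1 : \sum_(i < n | inl i \in [pred h : HE | star_vert h == ord0]) 1 = n.
  by rewrite (eq_bigl xpredT) ?sum1_card ?card_ord // => i; rewrite inE.
have E2 : \sum_(i < n | inr i \in [pred h : HE | star_vert h == ord0]) 1 = 0%N.
  by rewrite big_pred0 // => i; rewrite inE /= eq_sym (negbTE (neq_lift _ _)).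
by rewrite E1 E2 addn0.
Qed.

Lemma valency_leaf (i : 'I_n) : valency (G:=G) (leaf i) = 1%N.
Proof.
rewrite /valency -sum1_card big_sumType /=.
have E1 : \sum_(j < n | inl j \in [pred h : HE | star_vert h == leaf i]) 1 = 0%N.
  by rewrite big_pred0 // => j; rewrite inE /= /leaf (negbTE (neq_lift _ _)).
have E2 : \sum_(j < n | inr j \in [pred h : HE | star_vert h == leaf i]) 1 = 1%N.
  rewrite (big_pred1 i) // => j; rewrite inE /= /leaf.
by rewrite E1 E2.
Qed.


Lemma htrunc_inl (i : 'I_n) : @htrunc G m (inl i) = (n == 1%N) && (m ord0 == 1%N).
Proof. by rewrite /htrunc /= valency_center. Qed.

Lemma htrunc_inr (i : 'I_n) : @htrunc G m (inr i) = (m (leaf i) == 1%N).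
Proof. by rewrite /htrunc /= valency_leaf. Qed.

Lemma iter_succ_inl (i : 'I_n) r : iter r (@hsucc G) (inl i) = inl (iter r (@ordS n) i).
Proof. by elim: r => //= r ->. Qed.

Lemma cyc_word_inl (i : 'I_n) :
  cyc_word (G:=G) (inl i) = [seq inl (iter r (@ordS n) i) | r <- iota 0 n].
Proof.
rewrite /cyc_word /= valency_center; apply: eq_map => r; exact: iter_succ_inl.
Qed.

Lemma cyc_word_inr (i : 'I_n) : cyc_word (G:=G) (inr i) = [:: inr i].
Proof. by rewrite /cyc_word /= valency_leaf. Qed.

Definition Cw (i : 'I_n) : seq HE := flatten (nseq (m ord0) (cyc_word (G:=G) (inl i))).
Definition Bw (i : 'I_n) : seq HE := flatten (nseq (m (leaf i)) (cyc_word (G:=G) (inr i))).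
Definition N := (n * m ord0)%N.

Lemma flatten_nseq1 (T : Type) k (x : T) : flatten (nseq k [:: x]) = nseq k x.
Proof. by elim: k => //= k ->. Qed.

Lemma Bw_eq i : Bw i = nseq (m (leaf i)) (inr i).
Proof. by rewrite /Bw cyc_word_inr flatten_nseq1. Qed.

Lemma size_flatten_nseq (T : Type) k (s : seq T) : size (flatten (nseq k s)) = (k * size s)%N.
Proof. by elim: k => //= k IH; rewrite size_cat IH mulSn. Qed.

Lemma size_Cw i : size (Cw i) = N.
Proof. by rewrite /Cw size_flatten_nseq cyc_word_inl size_map size_iota mulnC. Qed.

Lemma size_Bw i : size (Bw i) = m (leaf i).
Proof. by rewrite Bw_eq size_nseq. Qed.

Definition isr (h : HE) := if h is inr _ then true else false.
Definition isl (h : HE) := if h is inl _ then true else false.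

Lemma has_flatten_nseq (T : Type) (P : pred T) k s :
  has P (flatten (nseq k s)) = (0 < k)%N && has P s.
Proof. elim: k => //= k IH; rewrite has_cat IH; case: k {IH} => [|k] /=; rewrite ?orbF ?orbb //. Qed.

Lemma has_isr_Cw i : has isr (Cw i) = false.
Proof.
rewrite /Cw has_flatten_nseq cyc_word_inl.
by rewrite (_ : has _ _ = false) ?andbF //; apply/hasPn => x /mapP [r _ ->].
Qed.

Lemma has_isl_Bw i : has isl (Bw i) = false.
Proof. by rewrite Bw_eq; apply/hasPn => x /nseqP [->]. Qed.

Lemma has_isr_Bw i : (0 < m (leaf i))%N -> has isr (Bw i).
Proof. by rewrite Bw_eq; case: (m (leaf i)). Qed.

Lemma iota0S k : iota 0 k.+1 = 0%N :: map succn (iota 0 k).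
Proof. by rewrite /= (iotaDl 1 0); congr (_ :: _); apply: eq_map => x; rewrite add1n. Qed.

Lemma cyc_word_inl_cons (i : 'I_n) :
  exists t, cyc_word (G:=G) (inl i) = inl i :: t /\
            cyc_word (G:=G) (inl (ordS i)) = t ++ [:: inl i].
Proof.
have Hn : n = n.-1.+1 by rewrite prednK // (leq_ltn_trans _ (ltn_ord i)).
have I1 : iota 0 n = 0%N :: map succn (iota 0 n.-1) by rewrite {1}Hn iota0S.
have I2 : iota 0 n = iota 0 n.-1 ++ [:: n.-1] by rewrite {1}Hn -addn1 iotaD.
exists [seq inl (iter r.+1 (@ordS n) i) | r <- iota 0 n.-1]; split.
  by rewrite cyc_word_inl I1 /= -map_comp.
rewrite cyc_word_inl I2 map_cat /=.
have -> : iter n.-1 (@ordS n) (ordS i) = i by rewrite -iterSr -Hn iter_ordS_n.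
by congr (_ ++ _); apply: eq_map => r /=; rewrite -iterSr.
Qed.

Lemma Cw_shift i : (0 < m ord0)%N -> Cw i ++ [:: inl i] = inl i :: Cw (ordS i).
Proof.
move=> _; have [t [E1 E2]] := cyc_word_inl_cons i.
rewrite /Cw E1 E2; elim: (m ord0) => //= k IH.
by rewrite -catA IH -catA.
Qed.

Lemma Cw_head i : (0 < m ord0)%N -> exists t, Cw i = inl i :: t.
Proof.
have [t [E1 _]] := cyc_word_inl_cons i.
by rewrite /Cw E1; case: (m ord0) => // k _; eexists.
Qed.


Definition CT := ((n == 1%N) && (m ord0 == 1%N)).

Lemma map_iotaS (T : Type) (f : nat -> T) k r :
  [seq f t | t <- iota k.+1 r] = [seq f t.+1 | t <- iota k r].
Proof. by elim: r k => //= r IH k; rewrite IH. Qed.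

Lemma comp_inl_iota (i : 'I_n) r : ~~ CT ->
  composable (Q:=Q) i [seq inl (iter t (@ordS n) i) | t <- iota 0 r] /\ last i (map (@qtgt Q) [seq inl (iter t (@ordS n) i) | t <- iota 0 r]) = iter r (@ordS n) i.
Proof.
move=> hc; elim: r i => [|r IH] i //=.
have [IH1 IH2] := IH (ordS i).
have E : [seq (inl (iter t (@ordS n) i) : HE) | t <- iota 1 r] =
         [seq inl (iter t (@ordS n) (ordS i)) | t <- iota 0 r].
  by rewrite (map_iotaS (fun t => inl (iter t (@ordS n) i) : HE) 0 r); apply: eq_map => t /=; rewrite -iterSr.
rewrite E eqxx htrunc_inl -/CT hc /= -iterS iterSr; split=> //.
Qed.

Lemma comp_Cw (i : 'I_n) k : ~~ CT ->
  composable (Q:=Q) i (flatten (nseq k (cyc_word (G:=G) (inl i)))) /\ last i (map (@qtgt Q) (flatten (nseq k (cyc_word (G:=G) (inl i))))) = i.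
Proof.
move=> hc; have [H1 H2] := comp_inl_iota i n hc; rewrite iter_ordS_n in H2.
rewrite -cyc_word_inl in H1 H2.
elim: k => [|k [IH1 IH2]]; first by [].
rewrite [flatten _]/= composable_cat map_cat last_cat H1 H2 IH1 IH2.
by [].
Qed.

Lemma comp_nseq_inr (i : 'I_n) k : ~~ @htrunc G m (inr i) ->
  composable (Q:=Q) i (nseq k (inr i)) /\ last i (map (@qtgt Q) (nseq k (inr i))) = i.
Proof.
move=> hr; elim: k => [|k [IH1 IH2]] //=.
by rewrite eqxx /qarrow /= IH1 IH2 hr.
Qed.

Definition pC (i : 'I_n) : qpath Q := (i, Cw i).
Definition pB (i : 'I_n) : qpath Q := (i, Bw i).

Lemma valid_pC i : ~~ CT -> pvalid (pC i) /\ ptgt (pC i) = i.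
Proof. by move=> hc; have [] := comp_Cw i (m ord0) hc. Qed.

Lemma valid_pB i : ~~ @htrunc G m (inr i) -> pvalid (pB i) /\ ptgt (pB i) = i.
Proof. by move=> hr; rewrite /pB /pvalid /ptgt /= Bw_eq; apply: comp_nseq_inr. Qed.


Local Open Scope ring_scope.
Local Notation ht := (@htrunc G m).
Local Notation I := (@bg_ideal K G m q).
Local Notation R := (@bg_relations K G m q).

Definition g (i : 'I_n) : qpath Q -> K :=
  kq_add (kq_scale (@qcoef K G q (inr i)) (kq_path (pB i)))
         (kq_scale (- @qcoef K G q (inl i)) (kq_path (pC i))).

Lemma rel_cases r : R r ->
  (exists i, ~~ CT /\ ~~ ht (inr i) /\ (r = g i \/ r = kq_scale (-1) (g i))) \/
  (exists i, ht (inr i) /\ r = kq_path ((i, Cw i ++ [:: inl i]) : qpath Q)) \/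
  (exists i, CT /\ r = kq_path ((i, Bw i ++ [:: inr i]) : qpath Q)) \/
  (exists j, ~~ CT /\ ~~ ht (inr (ordS j)) /\
                r = kq_path ((j, [:: inl j; inr (ordS j)]) : qpath Q)) \/
  (exists j, ~~ CT /\ ~~ ht (inr j) /\ r = kq_path ((j, [:: inr j; inl j]) : qpath Q)).
Proof.
case=> [[h [H1 [H2 ->]]] | [[h [H1 ->]] | [h [h' [H1 [H2 [H3 [H4 ->]]]]]]]].
- case: h H1 H2 => i H1 H2 /=.
    left; exists i; rewrite htrunc_inl -/CT in H1; split=> //; split=> //.
    right; apply: functional_extensionality => p.
    rewrite /g /kq_add /kq_scale /=.
    rewrite /qcoef /=. ring.
  by left; exists i; rewrite htrunc_inl -/CT in H2; split=> //; split=> //; left.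
- case: h H1 => i H1.
    by right; right; left; exists i; rewrite htrunc_inl -/CT in H1.
  by right; left; exists i.
- case: h h' H1 H2 H3 H4 => j [] k /= H1 H2 H3 H4.
  + by exfalso; apply: H4; rewrite H3.
  + right; right; right; left; exists j; rewrite htrunc_inl -/CT in H1; rewrite -H3 in H2 *.
    by split=> //; split.
  + right; right; right; right; exists j; rewrite htrunc_inl -/CT in H2; rewrite -H3 in H2 *.
    by split=> //; split.
  + by exfalso; apply: H4; rewrite H3.
Qed.


Lemma supp_path (p0 p : qpath Q) : (kq_path p0 : qpath Q -> K) p != 0 -> p = p0.
Proof. by rewrite /kq_path; case: (p =P p0) => // _; rewrite eqxx. Qed.

Lemma supp_scale c (x : qpath Q -> K) p : kq_scale c x p != 0 -> x p != 0.
Proof. by rewrite /kq_scale mulf_eq0 negb_or => /andP[]. Qed.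

Lemma supp_g i p : g i p != 0 -> p = pB i \/ p = pC i.
Proof.
rewrite /g /kq_add /kq_scale /kq_path.
case: (p =P pB i) => [->|_]; first by left.
case: (p =P pC i) => [->|_]; first by right.
by rewrite !mulr0 addr0 eqxx.
Qed.

Lemma rel_supp r p : R r -> r p != 0 ->
  (exists i, ~~ CT /\ ~~ ht (inr i) /\ (p = pB i \/ p = pC i)) \/
  (exists i, ht (inr i) /\ p = (i, Cw i ++ [:: inl i])) \/
  (exists i, CT /\ p = (i, Bw i ++ [:: inr i])) \/
  (exists j, ~~ CT /\ ~~ ht (inr (ordS j)) /\ p = (j, [:: inl j; inr (ordS j)])) \/
  (exists j, ~~ CT /\ ~~ ht (inr j) /\ p = (j, [:: inr j; inl j])).
Proof.
move=> /rel_cases [[i [H1 [H2 E]]]|[[i [H1 E]]|[[i [H1 E]]|[[j [H1 [H2 E]]]|[j [H1 [H2 E]]]]]]] Hp.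
- left; exists i; split=> //; split=> //; apply: supp_g.
  by case: E Hp => ->; last move/supp_scale.
- by right; left; exists i; split=> //; rewrite E in Hp; apply: supp_path.
- by right; right; left; exists i; split=> //; rewrite E in Hp; apply: supp_path.
- by right; right; right; left; exists j; split=> //; split=> //; rewrite E in Hp; apply: supp_path.
- by right; right; right; right; exists j; split=> //; split=> //; rewrite E in Hp; apply: supp_path.
Qed.


Lemma fact_has (T : Type) (P : pred T) (w s : seq T) : fact w s -> has P w -> has P s.
Proof. by move=> [u [v ->]] H; rewrite !has_cat H orbT. Qed.

Lemma fact_eq_size (T : Type) (w s : seq T) : fact w s -> size w = size s -> w = s.
Proof.
move=> [u [v ->]]; rewrite !size_cat => E.
have : (size u + size v = 0)%N by lia.
by case: u {E} => // ; case: v => //= _; rewrite cats0.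
Qed.

Lemma fact_nseq (T : eqType) (w : seq T) k x : fact w (nseq k x) -> w = nseq (size w) x.
Proof.
move=> [u [v E]]; apply/all_pred1P.
have : all (pred1 x) (nseq k x) by apply/all_pred1P; rewrite size_nseq.
by rewrite E !all_cat => /and3P[].
Qed.

Lemma fact_cons1 (T : Type) (w s : seq T) x : fact w (x :: s) -> size w = size s ->
  (exists t, w = x :: t) \/ w = s.
Proof.
move=> [u [v E]] Sz.
case: u E => [|y u] /= E.
  case: w E Sz => [|z w] /= E Sz.
    by right; case: s E Sz.
  by left; case: E => -> _; exists w.
case: E => _ E; right.
have : (size u + size v = 0)%N by move: (congr1 size E); rewrite !size_cat Sz; lia.
by case: u E => //; case: v => //= E _; rewrite cats0 in E.
Qed.

Variable hm : forall a : 'I_n.+1, (0 < m a)%N.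

Lemma has_isl_Cw i : has isl (Cw i).
Proof. by have [t ->] := Cw_head i (hm ord0). Qed.

Lemma N_pos (i : 'I_n) : (0 < N)%N.
Proof. by rewrite /N muln_gt0 hm andbT (leq_ltn_trans (leq0n _) (ltn_ord i)). Qed.


Lemma kq_path_ne (p0 p : qpath Q) : p <> p0 -> (kq_path p0 : qpath Q -> K) p = 0.
Proof. by rewrite /kq_path; case: eqP. Qed.

Lemma inv3 x p : ~~ CT -> I x -> x p != 0 ->
  has isr p.2 \/ (N < size p.2)%N \/ exists k, ~~ ht (inr k) /\ p.2 = Cw k.
Proof.
move=> hc Ix Hp.
apply: (@ideal_supp K Q R (fun t => has isr t \/ (N < size t)%N \/
          exists k, ~~ ht (inr k) /\ t = Cw k) _ _ x Ix p Hp).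
- move=> l t t' [H|[H|[k [Hk E]]]].
  + by left; rewrite !has_cat H orbT.
  + by right; left; rewrite !size_cat; lia.
  + have [Hz|Hnz] := eqVneq (size l + size t')%N 0%N.
      move: Hz; case: l => //; case: t' => //= _.
      by right; right; exists k; rewrite cats0.
    by right; left; rewrite !size_cat E size_Cw; lia.
- move=> r p0 Rr Hr.
  case: (rel_supp Rr Hr) => [[i [_ [Hi [->|->]]]]|[[i [_ ->]]|[[i [H _]]|[[j [_ [_ ->]]]|[j [_ [_ ->]]]]]]].
  + by left; apply: has_isr_Bw; apply: hm.
  + by right; right; exists i.
  + by right; left; rewrite /= size_cat size_Cw /=; lia.
  + by rewrite H in hc.
  + by left.
  + by left.
Qed.

Lemma pB_pC_ne i k : pB i <> pC k.
Proof.
move=> [_ E]; have := has_isr_Bw (hm (leaf i)); rewrite E has_isr_Cw //.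
Qed.

Lemma LI_inv i x : ~~ CT -> ~~ ht (inr i) -> I x ->
  @qcoef K G q (inr i) * x (pC i) + @qcoef K G q (inl i) * x (pB i) = 0.
Proof.
move=> hc hr Ix.
have [VC TC] := valid_pC i hc; have [VB TB] := valid_pB hr.
have := @ideal_LI K Q R (pC i) (pB i) (@qcoef K G q (inr i)) (@qcoef K G q (inl i))
  erefl (etrans TC (esym TB)) VC VB _ _ x Ix.
case=> //.
- move=> r v w Rr Hw; apply/eqP; apply: contraT => Hr.
  have Hb : forall t, has isr t -> has isl t -> ~ (pfact t (Cw i) \/ pfact t (Bw i)).
    move=> t H1 H2 [[Hf _]|[Hf _]].
      by have := fact_has Hf H1; rewrite has_isr_Cw.
    by have := fact_has Hf H2; rewrite has_isl_Bw.
  case: (rel_supp Rr Hr) => [[k [_ [Hk [[_ E]|[_ E]]]]]|[[k [_ [_ E]]]|[[k [H _]]|[[j [_ [_ [_ E]]]]|[j [_ [_ [_ E]]]]]]]].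
  + rewrite /= in E; rewrite E in Hw; case: Hw => [[Hf _]|[Hf Hs]].
      by have := fact_has Hf (has_isr_Bw (hm (leaf k))); rewrite has_isr_Cw.
    rewrite /= in Hf Hs; rewrite (Bw_eq i) in Hf.
    have := fact_nseq Hf; rewrite (Bw_eq k) size_nseq.
    case: (m (leaf k)) (hm (leaf k)) Hs => // mk _ Hs [Eki].
    by move: Hs; rewrite Eki ltnn.
  + rewrite /= in E; rewrite E in Hw; case: Hw => [[Hf Hs]|[Hf _]].
      by move: Hs; rewrite !size_Cw ltnn.
    by have := fact_has Hf (has_isl_Cw k); rewrite has_isl_Bw.
  + rewrite E in Hw; case: Hw => [[Hf Hs]|[Hf _]].
      by move: Hs; rewrite size_cat !size_Cw /=; lia.
    have Hl : has isl (Cw k ++ [:: inl k]) by rewrite has_cat has_isl_Cw.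
    by have := fact_has Hf Hl; rewrite /= has_isl_Bw.
  + by rewrite H in hc.
  + by rewrite E in Hw; exfalso; apply: (Hb _ _ _ Hw).
  + by rewrite E in Hw; exfalso; apply: (Hb _ _ _ Hw).
- move=> r Rr.
  case: (rel_cases Rr) => [[k [_ [Hk E]]]|[[k [_ E]]|[[k [H _]]|[[j [_ [_ E]]]|[j [_ [_ E]]]]]]].
  + have Hg : @qcoef K G q (inr i) * g k (pC i) + @qcoef K G q (inl i) * g k (pB i) = 0.
      rewrite /g /kq_add /kq_scale.
      have [Eki|Nki] := eqVneq k i.
        have E1 : (kq_path (pB i) : qpath Q -> K) (pC i) = 0.
          by apply: kq_path_ne => Hx; apply: (@pB_pC_ne i i); rewrite Hx.
        have E2 : (kq_path (pC i) : qpath Q -> K) (pB i) = 0.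
          by apply: kq_path_ne; apply: pB_pC_ne.
        rewrite Eki E1 E2 /kq_path !eqxx; ring.
      have F1 : pC i <> pB k by move=> Hx; apply: (@pB_pC_ne k i); rewrite Hx.
      have F2 : pC i <> pC k by move=> [Ea _]; rewrite Ea eqxx in Nki.
      have F3 : pB i <> pB k by move=> [Ea _]; rewrite Ea eqxx in Nki.
      have F4 : pB i <> pC k by apply: pB_pC_ne.
      by rewrite (kq_path_ne F1) (kq_path_ne F2) (kq_path_ne F3) (kq_path_ne F4); ring.
    case: E => ->; first exact: Hg.
    by rewrite /kq_scale !mulrA ![_ * -1]mulrC -!mulrA -mulrDr Hg mulr0.
  + have F1 : pC i <> (k, Cw k ++ [:: inl k]).
      by move=> [_ Ew]; move: (congr1 size Ew); rewrite size_cat !size_Cw /=; lia.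
    have F2 : pB i <> (k, Cw k ++ [:: inl k]).
      by move=> [_ Ew]; have := has_isl_Bw i; rewrite Ew has_cat has_isl_Cw.
    by rewrite E (kq_path_ne F1) (kq_path_ne F2); ring.
  + by rewrite H in hc.
  + have F1 : pC i <> (j, [:: inl j; inr (ordS j)]).
      by move=> [_ Ew]; have := has_isr_Cw i; rewrite Ew.
    have F2 : pB i <> (j, [:: inl j; inr (ordS j)]).
      by move=> [_ Ew]; have := has_isl_Bw i; rewrite Ew.
    by rewrite E (kq_path_ne F1) (kq_path_ne F2); ring.
  + have F1 : pC i <> (j, [:: inr j; inl j]).
      by move=> [_ Ew]; have := has_isr_Cw i; rewrite Ew.
    have F2 : pB i <> (j, [:: inr j; inl j]).
      by move=> [_ Ew]; have := has_isl_Bw i; rewrite Ew.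
    by rewrite E (kq_path_ne F1) (kq_path_ne F2); ring.
Qed.


Lemma valid_T3a j : ~~ CT -> ~~ ht (inr (ordS j)) ->
  pvalid ((j, [:: inl j; inr (ordS j)]) : qpath Q).
Proof. by move=> hc hr; rewrite /pvalid /= !eqxx /qarrow /= htrunc_inl -/CT hc hr. Qed.

Lemma valid_T3b j : ~~ CT -> ~~ ht (inr j) -> pvalid ((j, [:: inr j; inl j]) : qpath Q).
Proof. by move=> hc hr; rewrite /pvalid /= !eqxx /qarrow /= htrunc_inl -/CT hc hr. Qed.

Lemma valid_T2 i : ~~ CT -> pvalid ((i, Cw i ++ [:: inl i]) : qpath Q).
Proof.
move=> hc; have [V T] := valid_pC i hc.
rewrite /pvalid /= composable_cat; rewrite /pvalid /ptgt /= in V T.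
by rewrite V T /= eqxx /qarrow /= htrunc_inl -/CT hc.
Qed.

Lemma valid_T2' i : ~~ ht (inr i) -> pvalid ((i, Bw i ++ [:: inr i]) : qpath Q).
Proof.
move=> hr; rewrite /pvalid /= Bw_eq (_ : _ ++ _ = nseq (m (leaf i)).+1 (inr i)).
  by have [] := comp_nseq_inr (m (leaf i)).+1 hr.
by rewrite -addn1 nseqD.
Qed.

Lemma rel_valid r p : (CT -> forall i, ~~ ht (inr i)) -> R r -> r p != 0 -> pvalid p.
Proof.
move=> NS Rr Hr.
case: (rel_supp Rr Hr) => [[i [hc [Hi [->|->]]]]|[[i [H1 ->]]|[[i [H1 ->]]|[[j [hc [H2 ->]]]|[j [hc [H2 ->]]]]]]].
- by have [] := valid_pB Hi.
- by have [] := valid_pC i hc.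
- apply: valid_T2; apply: contraL H1 => hc; exact: NS.
- by apply: valid_T2'; apply: NS.
- exact: valid_T3a.
- exact: valid_T3b.
Qed.

Lemma elem_g i : ~~ CT -> ~~ ht (inr i) -> kq_elem (g i).
Proof.
move=> hc hr; apply: kq_elem_add; apply: kq_elem_scale; apply: kq_elem_path.
  by have [] := valid_pB hr.
by have [] := valid_pC i hc.
Qed.

Lemma rel_elem r : (CT -> forall i, ~~ ht (inr i)) -> R r -> kq_elem r.
Proof.
move=> NS Rr.
case: (rel_cases Rr) => [[i [hc [Hi [->|->]]]]|[[i [H1 ->]]|[[i [H1 ->]]|[[j [hc [H2 ->]]]|[j [hc [H2 ->]]]]]]].
- exact: elem_g.
- by apply: kq_elem_scale; apply: elem_g.
- apply: kq_elem_path; apply: valid_T2; apply: contraL H1 => hc; exact: NS.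
- by apply: kq_elem_path; apply: valid_T2'; apply: NS.
- by apply: kq_elem_path; apply: valid_T3a.
- by apply: kq_elem_path; apply: valid_T3b.
Qed.

Lemma ideal_valid_I x p : (CT -> forall i, ~~ ht (inr i)) -> I x -> x p != 0 -> pvalid p.
Proof. by move=> NS Ix Hp; apply: (ideal_valid (fun r p Rr Hr => rel_valid NS Rr Hr) Ix Hp). Qed.


Definition Sg (x : qpath Q -> K) : Prop :=
  (exists j, ~~ CT /\ ~~ ht (inr (ordS j)) /\ x = kq_path ((j, [:: inl j; inr (ordS j)]) : qpath Q)) \/
  (exists j, ~~ CT /\ ~~ ht (inr j) /\ x = kq_path ((j, [:: inr j; inl j]) : qpath Q)) \/
  (exists i, ~~ CT /\ ~~ ht (inr i) /\ x = g i).

Lemma Sg_R x : Sg x -> R x.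
Proof.
case=> [[j [hc [hr ->]]]|[[j [hc [hr ->]]]|[i [hc [hr ->]]]]].
- right; right; exists (inl j), (inr (ordS j)); rewrite htrunc_inl -/CT hc hr.
  by split=> //; split=> //; split=> //; split.
- right; right; exists (inr j), (inl j); rewrite htrunc_inl -/CT hc hr.
  by split=> //; split=> //; split=> //; split.
- by left; exists (inr i); rewrite /= htrunc_inl -/CT hc hr.
Qed.

Lemma Sg_elem x : Sg x -> kq_elem x.
Proof.
case=> [[j [hc [hr ->]]]|[[j [hc [hr ->]]]|[i [hc [hr ->]]]]].
- by apply: kq_elem_path; apply: valid_T3a.
- by apply: kq_elem_path; apply: valid_T3b.
- exact: elem_g.
Qed.

Lemma qC_neq0 i : @quantizing K G m q -> ~~ CT -> ~~ ht (inr i) -> @qcoef K G q (inl i) != 0.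
Proof. by move=> hq hc hr; apply: hq => //=; rewrite htrunc_inl -/CT. Qed.

Lemma qB_neq0 i : @quantizing K G m q -> ~~ CT -> ~~ ht (inr i) -> @qcoef K G q (inr i) != 0.
Proof. by move=> hq hc hr; apply: hq => //=; rewrite htrunc_inl -/CT. Qed.

Lemma redundant k : @quantizing K G m q -> ~~ CT -> ~~ ht (inr (ordS k)) ->
  in_ideal Sg (kq_path ((k, Cw k ++ [:: inl k]) : qpath Q)).
Proof.
move=> hq hc hr; set k' := ordS k.
have [VB TB] := valid_pB hr; have [VC TC] := valid_pC k' hc.
have Va : pvalid ((k, [:: inl k]) : qpath Q).
  by rewrite /pvalid /= eqxx /qarrow /= htrunc_inl -/CT hc.
have Ta : ptgt ((k, [:: inl k]) : qpath Q) = k' by [].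
set bb : qpath Q := (k', nseq (m (leaf k')).-1 (inr k')).
have Vbb : pvalid bb by have [] := comp_nseq_inr (m (leaf k')).-1 hr.
have V3 := valid_T3a hc hr.
have X1 : in_ideal Sg (kq_mul (kq_path ((k, [:: inl k]) : qpath Q)) (g k')).
  by apply: ideal_lmul; [apply: kq_elem_path | apply: ideal_gen; right; right; exists k'].
have X2 : in_ideal Sg (kq_mul (kq_path ((k, [:: inl k; inr k']) : qpath Q)) (kq_path bb)).
  by apply: ideal_rmul; [apply: kq_elem_path | apply: ideal_gen; left; exists k].
have E1 : kq_mul (kq_path ((k, [:: inl k]) : qpath Q)) (g k') =
   kq_add (kq_scale (@qcoef K G q (inr k')) (kq_path ((k, inl k :: Bw k') : qpath Q)))
          (kq_scale (- @qcoef K G q (inl k')) (kq_path ((k, inl k :: Cw k') : qpath Q))).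
  by rewrite /g kq_mul_addr !kq_mul_scaler !kq_mul_path // ?TB ?TC.
have E2 : kq_mul (kq_path ((k, [:: inl k; inr k']) : qpath Q) : qpath Q -> K) (kq_path bb) =
          kq_path ((k, inl k :: Bw k') : qpath Q).
  rewrite kq_mul_path //= Bw_eq.
  by case: (m (leaf k')) (hm (leaf k')).
rewrite E1 in X1; rewrite E2 in X2.
have hC := qC_neq0 hq hc hr.
have -> : kq_path ((k, Cw k ++ [:: inl k]) : qpath Q) =
   kq_scale (- (@qcoef K G q (inl k'))^-1)
     (kq_add (kq_add (kq_scale (@qcoef K G q (inr k')) (kq_path ((k, inl k :: Bw k') : qpath Q)))
          (kq_scale (- @qcoef K G q (inl k')) (kq_path ((k, inl k :: Cw k') : qpath Q))))
          (kq_scale (- @qcoef K G q (inr k')) (kq_path ((k, inl k :: Bw k') : qpath Q)))).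
  apply: functional_extensionality => p.
  rewrite Cw_shift ?hm // /kq_scale /kq_add -/k'.
  by field.
by apply: ideal_scale; apply: ideal_add => //; apply: ideal_scale.
Qed.


Lemma gen_good : @quantizing K G m q -> ~~ CT ->
  (forall j, ht (inr j) -> ~~ ht (inr (ordS j))) -> generates Sg I.
Proof.
move=> hq hc Htr; split; first exact: Sg_elem.
move=> x; split.
  by apply: ideal_mono => y Sy; apply: ideal_gen; apply: Sg_R.
apply: ideal_mono => r Rr.
case: (rel_cases Rr) => [[i [_ [Hi [->|->]]]]|[[k [H1 ->]]|[[k [H1 _]]|[[j [_ [H2 ->]]]|[j [_ [H2 ->]]]]]]].
- by apply: ideal_gen; right; right; exists i.
- by apply: ideal_scale; apply: ideal_gen; right; right; exists i.
- by apply: redundant => //; apply: Htr.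
- by rewrite H1 in hc.
- by apply: ideal_gen; left; exists j.
- by apply: ideal_gen; right; left; exists j.
Qed.

Lemma Cw_inj i k : Cw i = Cw k -> i = k.
Proof.
have [t Et] := Cw_head i (hm ord0); have [t' Et'] := Cw_head k (hm ord0).
by rewrite Et Et' => -[].
Qed.

Lemma gi_pC i : ~~ CT -> ~~ ht (inr i) -> @quantizing K G m q -> g i (pC i) != 0.
Proof.
move=> hc hr hq; rewrite /g /kq_add /kq_scale.
rewrite kq_path_ne; last by move=> E; apply: (@pB_pC_ne i i); rewrite E.
by rewrite /kq_path eqxx mulr0 add0r mulr1 oppr_eq0; apply: qC_neq0.
Qed.


Lemma Sg_supp s v w : Sg s -> s (v, w) != 0 ->
   (exists j, s = kq_path ((j, [:: inl j; inr (ordS j)]) : qpath Q) /\ w = [:: inl j; inr (ordS j)]) \/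
   (exists j, s = kq_path ((j, [:: inr j; inl j]) : qpath Q) /\ w = [:: inr j; inl j]) \/
   (exists k, ~~ ht (inr k) /\ s = g k /\ (w = Bw k \/ w = Cw k)).
Proof.
move=> [[j [_ [_ E]]]|[[j [_ [_ E]]]|[k [_ [hk E]]]]] Hs.
- by left; exists j; rewrite E in Hs *; move/supp_path: Hs => [_ ->].
- by right; left; exists j; rewrite E in Hs *; move/supp_path: Hs => [_ ->].
- right; right; exists k; split=> //; split=> //; rewrite E in Hs.
  by case: (supp_g Hs) => -[_ ->]; [left|right].
Qed.

Lemma min_good d : (2 < d)%N -> ~~ CT -> @quantizing K G m q ->
  (forall i, ~~ ht (inr i) -> m (leaf i) = d) -> N = d ->
  forall S', (forall x, S' x -> Sg x) -> generates S' I -> forall x, Sg x -> S' x.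
Proof.
move=> hd hc hq Hlen HN S' Hsub HS' x Sx.
case: (classic (S' x)) => // NS'; exfalso.
have Ix : I x by apply: ideal_gen; apply: Sg_R.
have big : forall k w, ~~ ht (inr k) -> (w = Bw k \/ w = Cw k) -> size w = d.
  by move=> k w hk [->|->]; rewrite ?size_Bw ?size_Cw ?Hlen.
case: Sx NS' => [[j [_ [_ Ex]]]|[[j [_ [_ Ex]]]|[i [_ [hi Ex]]]]] NS'.
- have Hp : x ((j, [:: inl j; inr (ordS j)]) : qpath Q) != 0.
    by rewrite Ex /kq_path eqxx oner_neq0.
  have [s [v [w [Ss [Hs Hf]]]]] := S_support HS' Ix Hp.
  case: (Sg_supp (Hsub s Ss) Hs) => [[j2 [Es Ew]]|[[j2 [Es Ew]]|[k [hk [Es Ew]]]]].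
  + rewrite Ew in Hf; move: (fact_eq_size Hf erefl) => [Ej _].
    by apply: NS'; rewrite Ex -Ej -Es.
  + by rewrite Ew in Hf; move: (fact_eq_size Hf erefl).
  + by have := fact_size Hf; rewrite (big k w hk Ew) /=; lia.
- have Hp : x ((j, [:: inr j; inl j]) : qpath Q) != 0.
    by rewrite Ex /kq_path eqxx oner_neq0.
  have [s [v [w [Ss [Hs Hf]]]]] := S_support HS' Ix Hp.
  case: (Sg_supp (Hsub s Ss) Hs) => [[j2 [Es Ew]]|[[j2 [Es Ew]]|[k [hk [Es Ew]]]]].
  + by rewrite Ew in Hf; move: (fact_eq_size Hf erefl).
  + rewrite Ew in Hf; move: (fact_eq_size Hf erefl) => [Ej _].
    by apply: NS'; rewrite Ex -Ej -Es.
  + by have := fact_size Hf; rewrite (big k w hk Ew) /=; lia.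
- have Hp : x (pC i) != 0 by rewrite Ex; apply: gi_pC.
  have [s [v [w [Ss [Hs Hf]]]]] := S_support HS' Ix Hp.
  rewrite /= in Hf.
  case: (Sg_supp (Hsub s Ss) Hs) => [[j2 [Es Ew]]|[[j2 [Es Ew]]|[k [hk [Es [Ew|Ew]]]]]].
  + by have := fact_has (P := isr) Hf; rewrite Ew has_isr_Cw => /(_ erefl).
  + by have := fact_has (P := isr) Hf; rewrite Ew has_isr_Cw => /(_ erefl).
  + by have := fact_has (P := isr) Hf; rewrite Ew has_isr_Cw => /(_ (has_isr_Bw (hm _))).
  + rewrite Ew in Hf; have := fact_eq_size Hf; rewrite !size_Cw => /(_ erefl) /Cw_inj Eki.
    by apply: NS'; rewrite Ex -Eki -Es.
Qed.


Lemma special_CT : @bg_special G m -> CT.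
Proof.
rewrite /bg_special /CT /= card_ord => /andP[/andP[-> _] /forallP H].
by rewrite H.
Qed.

Lemma len_path (p0 : qpath Q) : len_homogeneous (plen p0) (kq_path p0 : qpath Q -> K).
Proof. by move=> p /supp_path ->. Qed.

Lemma if_dir d : (2 < d)%N -> (0 < n)%N -> @quantizing K G m q ->
  (n %| d)%N -> m ord0 = (d %/ n)%N ->
  (forall i : 'I_n, (m (leaf i) = 1%N \/ m (leaf i) = d) /\
     (m (leaf i) * m (leaf (ordS i)) = d \/ m (leaf i) * m (leaf (ordS i)) = d ^ 2)%N) ->
  ~~ @bg_special G m /\ homogeneous2_alg I 2 d.
Proof.
move=> hd hn hq Hdiv Hm0 Hl.
have HN : N = d by rewrite /N Hm0 mulnC divnK.
have hc : ~~ CT.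
  apply/negP => /andP[/eqP n1 /eqP m01]; move: HN; rewrite /N m01 muln1 => E.
  by rewrite -E n1 in hd.
have Hlen : forall i, ~~ ht (inr i) -> m (leaf i) = d.
  by move=> i; rewrite htrunc_inr; case: (Hl i) => -[->|->].
have Htr : forall j, ht (inr j) -> ~~ ht (inr (ordS j)).
  move=> j; rewrite !htrunc_inr => /eqP E1; apply/negP => /eqP E2.
  case: (Hl j) => _; rewrite E1 E2 -mulnn => -[E|E]; move: hd; rewrite -?E; nia.
pose i0 : 'I_n := Ordinal hn.
pose i1 := if ht (inr i0) then ordS i0 else i0.
have hi1 : ~~ ht (inr i1).
  by rewrite /i1; case: ifP => [/Htr|/negbT].
split; first by apply: contra hc; apply: special_CT.
split; [exists Sg; split; [split|] | split].
- exact: gen_good hq hc Htr.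
- exact: min_good hd hc hq Hlen HN.
- move=> x [[j [_ [_ ->]]]|[[j [_ [_ ->]]]|[i [_ [hi ->]]]]].
  + by left; apply: len_path.
  + by left; apply: len_path.
  + right => p /supp_g [->|->]; rewrite /plen /=.
      by rewrite size_Bw Hlen.
    by rewrite size_Cw.
- move=> [S2 [HS2 H2]].
  have Ig : I (g i1) by apply: ideal_gen; apply: Sg_R; right; right; exists i1.
  have [s [v [w [Ss [Hs Hf]]]]] := S_support HS2 Ig (gi_pC hc hi1 hq).
  rewrite /= in Hf.
  case: (inv3 hc (gen_in HS2 Ss) Hs) => [H|[H|[k [_ Ew]]]] /=.
  + by have := fact_has Hf H; rewrite has_isr_Cw.
  + by have := fact_size Hf; rewrite size_Cw; rewrite /= in H; lia.
  + rewrite /= in Ew; have := H2 s Ss (v, w) Hs; rewrite /plen /= Ew size_Cw HN => E.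
    by rewrite E in hd.
- move=> [S2 [HS2 H2]].
  have It : I (kq_path ((i1, [:: inr i1; inl i1]) : qpath Q)).
    by apply: ideal_gen; apply: Sg_R; right; left; exists i1.
  have Hp : (kq_path ((i1, [:: inr i1; inl i1]) : qpath Q) : qpath Q -> K)
              ((i1, [:: inr i1; inl i1]) : qpath Q) != 0 by rewrite /kq_path eqxx oner_neq0.
  have [s [v [w [Ss [Hs Hf]]]]] := S_support HS2 It Hp.
  have := fact_size Hf; have := H2 s Ss (v, w) Hs; rewrite /plen /= => ->.
  by move: hd; lia.
Qed.


Lemma onlyif_dir d : (2 < d)%N -> (0 < n)%N -> @quantizing K G m q ->
  ~~ @bg_special G m -> homogeneous2_alg I 2 d ->
  [/\ (n %| d)%N, m ord0 = (d %/ n)%N &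
      forall i : 'I_n,
        (m (leaf i) = 1%N \/ m (leaf i) = d) /\
        (m (leaf i) * m (leaf (ordS i)) = d \/ m (leaf i) * m (leaf (ordS i)) = d ^ 2)%N].
Proof.
move=> hd hn hq hns [[S [[HS Hmin] Sh]] [N2 Nd]].
have key_single : forall L, (forall r, R r -> kq_elem r) ->
    (forall r, R r -> len_homogeneous L r) -> (exists r0 p0, R r0 /\ r0 p0 != 0) -> False.
  move=> L H1 H2 H3.
  by case: (single_length H1 H2 H3 HS Sh) => H; [apply: N2 | apply: Nd].
case: (boolP CT) => hcT.
  exfalso.
  have [n1 m01] : n = 1%N /\ m ord0 = 1%N by move: hcT => /andP[/eqP H1 /eqP H2].
  have Eall : forall j k : 'I_n, j = k.
    move=> j k; apply: ord_inj.
    have Hj : (j < 1)%N by rewrite -[X in (_ < X)%N]n1.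
    have Hk : (k < 1)%N by rewrite -[X in (_ < X)%N]n1.
    by move: Hj Hk; lia.
  have [i hi] : exists i, ~~ ht (inr i).
    have E1 : (n == 1%N) = true by apply/eqP.
    have E2 : (n.+1 == 2%N) = true by apply/eqP; rewrite n1.
    move: hns; rewrite /bg_special /= !card_ord E1 E2 /= negb_forall => /existsP [a Ha].
    case: (unliftP ord0 a) => [i Ea|Ea]; last by rewrite Ea m01 in Ha.
    by exists i; rewrite htrunc_inr /leaf -Ea.
  have NS : CT -> forall j, ~~ ht (inr j) by move=> _ j; rewrite (Eall j i).
  apply: (key_single (m (leaf i)).+1).
  - by move=> r Rr; apply: rel_elem NS Rr.
  - move=> r Rr.
    case: (rel_cases Rr) => [[k [H _]]|[[k [H _]]|[[k [_ ->]]|[[j [H _]]|[j [H _]]]]]].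
    + by rewrite hcT in H.
    + by rewrite (Eall k i) (negbTE hi) in H.
    + have := @len_path ((k, Bw k ++ [:: inr k]) : qpath Q).
      by rewrite /plen /= size_cat size_Bw (Eall k i) addn1.
    + by rewrite hcT in H.
    + by rewrite hcT in H.
  - exists (kq_path ((i, Bw i ++ [:: inr i]) : qpath Q)), ((i, Bw i ++ [:: inr i]) : qpath Q).
    split; last by rewrite /kq_path eqxx oner_neq0.
    by right; left; exists (inl i); rewrite htrunc_inl -/CT hcT.
have hc : ~~ CT := hcT.
have NS : CT -> forall j, ~~ ht (inr j) by move=> H; rewrite H in hc.
case: (boolP [exists i, ~~ ht (inr i)]) => [/existsP [i0 hi0] | /existsPn Hall]; last first.
  exfalso; pose i0 : 'I_n := Ordinal hn.
  apply: (key_single N.+1).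
  - by move=> r Rr; apply: rel_elem NS Rr.
  - move=> r Rr.
    case: (rel_cases Rr) => [[k [_ [H _]]]|[[k [_ ->]]|[[k [H _]]|[[j [_ [H _]]]|[j [_ [H _]]]]]]].
    + by move: (Hall k); rewrite H.
    + have := @len_path ((k, Cw k ++ [:: inl k]) : qpath Q).
      by rewrite /plen /= size_cat size_Cw addn1.
    + by rewrite H in hc.
    + by move: (Hall (ordS j)); rewrite H.
    + by move: (Hall j); rewrite H.
  - exists (kq_path ((i0, Cw i0 ++ [:: inl i0]) : qpath Q)), ((i0, Cw i0 ++ [:: inl i0]) : qpath Q).
    split; last by rewrite /kq_path eqxx oner_neq0.
    by right; left; exists (inr i0); move: (Hall i0); rewrite negbK.
have St1 : forall i, ~~ ht (inr i) -> m (leaf i) = N /\ (N = 2%N \/ N = d).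
  move=> i hi.
  have Ig : I (g i) by apply: ideal_gen; apply: Sg_R; right; right; exists i.
  have [s [v [w [Ss [Hs Hf]]]]] := S_support HS Ig (gi_pC hc hi hq).
  have Is := gen_in HS Ss.
  rewrite /= in Hf.
  have Ew : w = Cw i.
    case: (inv3 hc Is Hs) => [H|[H|[k [_ Ew]]]].
    + by have := fact_has Hf H; rewrite has_isr_Cw.
    + by have := fact_size Hf; rewrite size_Cw; rewrite /= in H; lia.
    + rewrite /= in Ew; apply: (fact_eq_size Hf); by rewrite Ew !size_Cw.
  have Ev : v = i.
    have := ideal_valid_I NS Is Hs; rewrite Ew; have [t ->] := Cw_head i (hm ord0).
    by rewrite /pvalid /= => /andP [/andP [/eqP -> _] _].
  rewrite Ew Ev -/(pC i) in Hs.
  have [l [Hl Hl2]] : exists l, len_homogeneous l s /\ (l = 2%N \/ l = d).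
    by case: (Sh s Ss) => H; [exists 2%N | exists d]; split=> //; [left|right].
  have EN : N = l by have := Hl _ Hs; rewrite /plen /= size_Cw.
  split; last by rewrite EN.
  case: (eqVneq (m (leaf i)) N) => // Hne; exfalso.
  have Z : s (pB i) = 0.
    apply/eqP; apply: contraT => H; have := Hl _ H; rewrite /plen /= size_Bw => E.
    by rewrite E EN eqxx in Hne.
  have := LI_inv hc hi Is; rewrite Z mulr0 addr0 => /eqP; rewrite mulf_eq0.
  by rewrite (negbTE (qB_neq0 hq hc hi)) (negbTE Hs).
have HN : N = d.
  have [Hm1 [N2'|//]] := St1 i0 hi0; exfalso; apply: N2.
  have Htr2 : forall j, ht (inr j) -> ~~ ht (inr (ordS j)).
    move=> j hj.
    have Nij : (nat_of_ord j != nat_of_ord i0).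
      by apply: contraL hj => /eqP /ord_inj ->.
    have Hn2 : (n <= 2)%N.
      move: N2'; rewrite /N => E; have := hm ord0; rewrite -E; nia.
    suff -> : ordS j = i0 by [].
    apply: ord_inj; rewrite /=.
    have := ltn_ord j; have := ltn_ord i0; move: Nij => Nij Hi Hj.
    case: (ltnP j.+1 n) => Hjn.
      by rewrite modn_small //; lia.
    have -> : j.+1 = n by lia.
    by rewrite modnn; lia.
  exists Sg; split; first exact: gen_good hq hc Htr2.
  move=> x [[j [_ [_ ->]]]|[[j [_ [_ ->]]]|[i [_ [hi ->]]]]].
  + exact: len_path.
  + exact: len_path.
  + have [Hmi _] := St1 i hi.
    move=> p /supp_g [->|->]; rewrite /plen /=.
      by rewrite size_Bw Hmi.
    by rewrite size_Cw.
have Hlen : forall i, ~~ ht (inr i) -> m (leaf i) = d.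
  by move=> i hi; have [-> _] := St1 i hi.
have Htr : forall j, ht (inr j) -> ~~ ht (inr (ordS j)).
  move=> j hj; apply/negP => hj'.
  have Rr : R (kq_path ((j, Cw j ++ [:: inl j]) : qpath Q)).
    by right; left; exists (inr j).
  have Hp : (kq_path ((j, Cw j ++ [:: inl j]) : qpath Q) : qpath Q -> K)
              ((j, Cw j ++ [:: inl j]) : qpath Q) != 0 by rewrite /kq_path eqxx oner_neq0.
  have [s [v [w [Ss [Hs Hf]]]]] := S_support HS (ideal_gen Rr) Hp.
  have Is := gen_in HS Ss.
  rewrite /= Cw_shift ?hm // in Hf.
  case: (inv3 hc Is Hs) => [H|[H|[k [hk Ew]]]].
  - by have := fact_has Hf H; rewrite /= has_isr_Cw.
  - rewrite /= in H; have := fact_size Hf; rewrite /= size_Cw => H2.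
    have Ew : size w = N.+1 by apply/eqP; rewrite eqn_leq H2 H.
    by case: (Sh s Ss) => /(_ _ Hs); rewrite /plen /= Ew HN => E; move: hd; lia.
  - rewrite /= in Ew; have Sz : size w = size (Cw (ordS j)) by rewrite Ew !size_Cw.
    case: (fact_cons1 Hf Sz) => [[t Et]|Et].
      have [t' Et'] := Cw_head k (hm ord0).
      by move: Et; rewrite Ew Et' => -[Ekj _]; rewrite -Ekj (negbTE hk) in hj.
    by move: Et; rewrite Ew => /Cw_inj Ek; rewrite -Ek (negbTE hk) in hj'.
split.
- by apply/dvdnP; exists (m ord0); rewrite -HN /N mulnC.
- by rewrite -HN /N mulKn.
- move=> i; split.
    by case: (boolP (ht (inr i))) => H; [left; apply/eqP; rewrite -htrunc_inr | right; apply: Hlen].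
  case: (boolP (ht (inr i))) => H.
    have H1 : m (leaf i) = 1%N by apply/eqP; rewrite -htrunc_inr.
    by left; rewrite H1 mul1n Hlen //; apply: Htr.
  rewrite (Hlen i H).
  case: (boolP (ht (inr (ordS i)))) => H'.
    by left; move: H'; rewrite htrunc_inr => /eqP ->; rewrite muln1.
  by right; rewrite Hlen // mulnn.
Qed.

End Star.

Theorem corollary2p6 (K : fieldType) (d n : nat)
    (m : 'I_n.+1 -> nat) (q : 'I_n -> 'I_n.+1 -> K) :
  (2 < d)%N -> (0 < n)%N ->
  (forall a, (0 < m a)%N) ->
  @quantizing K (star n) m q ->
  @bga_homogeneous2 K (star n) m q 2 d <->
  [/\ (n %| d)%N,
      m ord0 = (d %/ n)%N &
      forall i : 'I_n,
        (m (leaf i) = 1%N \/ m (leaf i) = d) /\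
        (m (leaf i) * m (leaf (ordS i)) = d \/ m (leaf i) * m (leaf (ordS i)) = d ^ 2)%N].
Proof.
move=> hd hn hm hq; split.
- rewrite /bga_homogeneous2; case: ifP => Hs.
    move=> [_ [N2 _]]; exfalso; apply: N2.
    exists (fun x => x = (kq_path ((tt, [:: tt; tt]) : qpath loop_quiver) : qpath loop_quiver -> K)).
    split; last first.
      move=> x -> p; rewrite /kq_path; case: (p =P _) => [->|] //; by rewrite eqxx.
    split; last by [].
    by move=> x ->; apply: kq_elem_path.
  by move=> H; apply: (onlyif_dir hm hd hn hq (negbT Hs) H).
- move=> [Hdiv Hm0 Hl].
  have [Hns H] := if_dir hm hd hn hq Hdiv Hm0 Hl.
  by rewrite /bga_homogeneous2 (negbTE Hns).
Qed.
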